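(* Let $\mathfrak{M}=\{M^{(\alpha)}:\alpha>0\}$ be a non-quasianalytic weight matrix such that $\mu^{(\alpha)}\le\mu^{(\beta)}$ termwise whenever $\alpha\le\beta$, \[ \forall\alpha>0\ \exists\beta>0:\ \liminf_{k\to\infty}\frac{\mu^{(\beta)}_k}{k}\sum_{j\ge2k}\frac1{\mu^{(\alpha)}_j}>0, \] and \[ \forall\alpha>0\ \exists\beta>0\ \exists A\ge1\ \forall j\in\mathbb{N}:\ (\mu^{(\alpha)}_j)^2\le A\mu^{(\beta)}_{2j}. \] Then (i) $\forall\alpha>0\ \exists\beta>0:\ \liminf_{k\to\infty}\frac{\mu^{(\beta)}_k}{k}\sum_{j\ge k}\frac1{\mu^{(\alpha)}_j}>0$, and (ii) $\forall\alpha>0\ \exists\beta>0\ \exists A\ge1\ \forall j\in\mathbb{N}_{\ge1}:\ \sigma^{(\alpha)}_j\le A(S^{(\beta)}_j)^{1/j}$.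
   Context: A weight sequence is $M=(M_k)_{k\ge0}$ with $M_k=\mu_0\cdots\mu_k$, $1=\mu_0\le\mu_1\le\cdots$, $\mu_k\to\infty$; non-quasianalytic if $\sum1/\mu_k<\infty$; $\mu^{(\alpha)}_k=M^{(\alpha)}_k/M^{(\alpha)}_{k-1}$. A weight matrix is a family $\{M^{(\alpha)}:\alpha>0\}$ of weight sequences with $M^{(\alpha)}\le M^{(\beta)}$ for $\alpha\le\beta$; non-quasianalytic if all members are. The derived sequences: $S^{(\alpha)}_k=\sigma^{(\alpha)}_0\cdots\sigma^{(\alpha)}_k$ with $\sigma^{(\alpha)}_0=1$, $\sigma^{(\alpha)}_k=\tau^{(\alpha)}_1k/\tau^{(\alpha)}_k$ and $\tau^{(\alpha)}_k=k/\mu^{(\alpha)}_k+\sum_{\ell\ge k}1/\mu^{(\alpha)}_\ell$ for $k\ge1$. *)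

(* Defs.v *)
From Stdlib Require Import Reals Lra.
From Coquelicot Require Import Coquelicot.
Open Scope R_scope.

(* A weight sequence given through its quotients mu_k (k >= 0):
   mu_0 = 1, mu nondecreasing, mu_k -> +oo. *)
Definition weight_seq (mu : nat -> R) : Prop :=
  mu 0%nat = 1 /\ (forall k, mu k <= mu (S k)) /\ is_lim_seq mu p_infty.

Fixpoint Mseq (mu : nat -> R) (k : nat) : R :=
  match k with
  | O => mu O
  | S k' => Mseq mu k' * mu k
  end.

Definition nonquasianalytic (mu : nat -> R) : Prop :=
  ex_series (fun k => / mu k).

Definition weight_matrix (mu : R -> nat -> R) : Prop :=
  (forall a, 0 < a -> weight_seq (mu a)) /\
  (forall a b, 0 < a -> a <= b -> forall k, Mseq (mu a) k <= Mseq (mu b) k).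

Definition nonquasianalytic_matrix (mu : R -> nat -> R) : Prop :=
  forall a, 0 < a -> nonquasianalytic (mu a).

Definition tail_sum (mu : nat -> R) (k : nat) : R := Series (fun n => / mu (k + n)%nat).

Definition tau_w (mu : nat -> R) (k : nat) : R := INR k / mu k + tail_sum mu k.

Definition sigma_w (mu : nat -> R) (k : nat) : R :=
  match k with
  | O => 1
  | S _ => tau_w mu 1 * INR k / tau_w mu k
  end.

Fixpoint Sseq (mu : nat -> R) (k : nat) : R :=
  match k with
  | O => sigma_w mu O
  | S k' => Sseq mu k' * sigma_w mu k
  end.

(* Main.v *)
Require Import Defs.
From Stdlib Require Import Reals Lra Lia.
From Coquelicot Require Import Coquelicot.
Open Scope R_scope.

Lemma sumn_S (a : nat -> R) n : sum_n a (S n) = sum_n a n + a (S n).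
Proof. rewrite sum_Sn. reflexivity. Qed.

Lemma sumn_le (a b : nat -> R) N : (forall n, a n <= b n) -> sum_n a N <= sum_n b N.
Proof. intros H; induction N. rewrite !sum_O; auto. rewrite !sumn_S. specialize (H (S N)). lra. Qed.

Lemma sumn_nonneg (a : nat -> R) N : (forall n, 0 <= a n) -> 0 <= sum_n a N.
Proof. intros H; induction N. rewrite sum_O; auto. rewrite sumn_S. specialize (H (S N)). lra. Qed.

Lemma sumn_mono (a : nat -> R) N M : (forall n, 0 <= a n) -> (N <= M)%nat -> sum_n a N <= sum_n a M.
Proof. intros H HNM; induction HNM. lra. rewrite sumn_S. specialize (H (S m)). lra. Qed.

Lemma sumn_scal (c : R) (a : nat -> R) N : sum_n (fun n => c * a n) N = c * sum_n a N.
Proof. induction N. rewrite !sum_O; reflexivity. rewrite !sumn_S, IHN. simpl. ring. Qed.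

Lemma series_le_bound (a : nat -> R) B : ex_series a -> (forall N, sum_n a N <= B) -> Series a <= B.
Proof.
  intros Ha H. pose proof (Series_correct a Ha) as Hs.
  assert (Hc := is_lim_seq_const B).
  pose proof (is_lim_seq_le (sum_n a) (fun _ => B) (Series a) B H Hs Hc). simpl in H0. exact H0.
Qed.

Lemma sumn_le_series (a : nat -> R) N : ex_series a -> (forall n, 0 <= a n) -> sum_n a N <= Series a.
Proof.
  intros Ha H. pose proof (Series_correct a Ha) as Hs.
  assert (Hc := is_lim_seq_const (sum_n a N)).
  assert (Hev : eventually (fun n => (fun _ => sum_n a N) n <= sum_n a n)).
  { exists N. intros n Hn. apply sumn_mono; auto. }
  pose proof (is_lim_seq_le_loc (fun _ => sum_n a N) (sum_n a) (sum_n a N) (Series a) Hev Hc Hs). simpl in H0. exact H0.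
Qed.

Lemma series_nonneg (a : nat -> R) : ex_series a -> (forall n, 0 <= a n) -> 0 <= Series a.
Proof. intros. eapply Rle_trans. apply (sumn_nonneg a 0); auto. apply sumn_le_series; auto. Qed.

Lemma liminf_pos (u : nat -> R) : Rbar_lt 0 (LimInf_seq u) ->
  exists eps, 0 < eps /\ exists N, forall n, (N <= n)%nat -> eps < u n.
Proof.
  intros H. destruct (ex_LimInf_seq u) as [l Hl].
  rewrite (is_LimInf_seq_unique _ _ Hl) in H.
  destruct l as [r| |]; simpl in *.
  - assert (Hr : 0 < r / 2) by lra.
    destruct (Hl (mkposreal _ Hr)) as [_ [N HN]]. exists (r/2). split; auto.
    exists N. intros n Hn. specialize (HN n Hn). simpl in HN. lra.
  - destruct (Hl 1) as [N HN]. exists 1. split. lra. exists N. auto.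
  - contradiction.
Qed.

Lemma ws_ge1 rho : weight_seq rho -> forall k, 1 <= rho k.
Proof. intros [H0 [Hs _]] k. induction k. lra. specialize (Hs k). lra. Qed.

Lemma ws_mono rho : weight_seq rho -> forall k l, (k <= l)%nat -> rho k <= rho l.
Proof. intros [H0 [Hs _]] k l H. induction H. lra. specialize (Hs m). lra. Qed.

Lemma tail_ex rho k : ex_series (fun n => / rho n) -> ex_series (fun n => / rho (k + n)%nat).
Proof. intros H. apply (ex_series_incr_n (fun n => / rho n) k). exact H. Qed.

Lemma tail_S rho k : ex_series (fun n => / rho n) ->
  tail_sum rho k = / rho k + tail_sum rho (S k).
Proof.
  intros H. unfold tail_sum. rewrite Series_incr_1 by (apply tail_ex; auto).
  rewrite Nat.add_0_r. f_equal. apply Series_ext. intros n. f_equal. f_equal. lia.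
Qed.

Lemma tail_nonneg rho k : weight_seq rho -> ex_series (fun n => / rho n) -> 0 <= tail_sum rho k.
Proof.
  intros W H. unfold tail_sum. apply series_nonneg. apply tail_ex; auto.
  intros n. pose proof (ws_ge1 rho W (k+n)). left. apply Rinv_0_lt_compat. lra.
Qed.

Lemma tail_mono rho k l : weight_seq rho -> ex_series (fun n => / rho n) -> (k <= l)%nat ->
  tail_sum rho l <= tail_sum rho k.
Proof.
  intros W H Hkl. induction Hkl. lra. rewrite (tail_S rho m H) in IHHkl.
  pose proof (ws_ge1 rho W m). assert (0 < / rho m) by (apply Rinv_0_lt_compat; lra). lra.
Qed.

Lemma tail_split rho k n : weight_seq rho -> ex_series (fun n => / rho n) ->
  tail_sum rho k <= INR n / rho k + tail_sum rho (k + n).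
Proof.
  intros W H. induction n.
  - rewrite Nat.add_0_r. simpl. unfold Rdiv. lra.
  - rewrite (tail_S rho (k+n) H) in IHn. rewrite <- plus_n_Sm.
    pose proof (ws_ge1 rho W k). pose proof (ws_mono rho W k (k+n) ltac:(lia)).
    assert (/ rho (k+n)%nat <= / rho k) by (apply Rinv_le_contravar; lra).
    rewrite S_INR. unfold Rdiv in *. lra.
Qed.

Lemma pair_sum (a : nat -> R) N : sum_n a (2*N+1) = sum_n (fun n => a (2*n)%nat + a (2*n+1)%nat) N.
Proof.
  induction N.
  - simpl. rewrite sumn_S, !sum_O. reflexivity.
  - replace (2 * S N + 1)%nat with (S (S (2*N+1))) by lia.
    rewrite !sumn_S, IHN.
    assert (E1: a (S (2*N+1)) = a (2 * S N)%nat) by (f_equal; lia).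
    assert (E2: a (S (S (2*N+1))) = a (2 * S N + 1)%nat) by (f_equal; lia).
    rewrite E1, E2. simpl. ring.
Qed.

Lemma inv_bound x y r A : 0 < x -> x <= y -> 0 < r -> y*y <= A*r -> / r <= A * / x * / y.
Proof.
  intros Hx Hxy Hr H. apply Rmult_le_reg_l with (x*y*r). 
  apply Rmult_lt_0_compat; [apply Rmult_lt_0_compat|]; lra.
  replace (x*y*r*/r) with (x*y) by (field; lra).
  replace (x*y*r*(A*/x*/y)) with (A*r) by (field; lra). nra.
Qed.

Lemma SQ nu rho A : weight_seq nu -> weight_seq rho -> ex_series (fun n => / nu n) ->
  ex_series (fun n => / rho n) -> 0 < A ->
  (forall m, (nu m)^2 <= A * rho (2*m)%nat) ->
  forall m, tail_sum rho (2*m) <= 2 * A * tail_sum nu m / nu m.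
Proof.
  intros Wn Wr En Er HA Hsq m. unfold tail_sum at 1. apply series_le_bound. apply tail_ex; auto.
  intros N. eapply Rle_trans. apply (sumn_mono _ N (2*N+1)). 
  intros n. pose proof (ws_ge1 rho Wr (2*m+n)). left. apply Rinv_0_lt_compat. lra. lia.
  rewrite pair_sum.
  eapply Rle_trans. apply (sumn_le _ (fun n => (2 * A / nu m) * / nu (m+n)%nat)).
  - intros n. 
    pose proof (ws_ge1 nu Wn m). pose proof (ws_mono nu Wn m (m+n) ltac:(lia)).
    pose proof (ws_ge1 rho Wr (2*(m+n))).
    pose proof (ws_mono rho Wr (2*(m+n)) (2*m + (2*n+1)) ltac:(lia)).
    assert (/ rho (2*m + (2*n+1))%nat <= / rho (2*(m+n))%nat) by (apply Rinv_le_contravar; lra).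
    replace (2*m + 2*n)%nat with (2*(m+n))%nat by lia.
    assert (/ rho (2*(m+n))%nat <= A * / nu m * / nu (m+n)%nat).
    { apply inv_bound; try lra. specialize (Hsq (m+n)%nat). replace (nu (m+n)%nat * nu (m+n)%nat) with (nu (m+n)%nat ^ 2) by (simpl; ring). exact Hsq. }
    unfold Rdiv. lra.
  - rewrite sumn_scal. 
    replace (2 * A * tail_sum nu m / nu m) with (2 * A / nu m * tail_sum nu m) by (unfold Rdiv; ring).
    pose proof (ws_ge1 nu Wn m).
    apply Rmult_le_compat_l. unfold Rdiv. apply Rmult_le_pos. lra. left; apply Rinv_0_lt_compat; lra.
    apply sumn_le_series. apply tail_ex; auto.
    intros n. pose proof (ws_ge1 nu Wn (m+n)). left. apply Rinv_0_lt_compat. lra.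
Qed.

Definition HW (mu : R -> nat -> R) := forall a, 0 < a -> weight_seq (mu a).
Definition HN (mu : R -> nat -> R) := forall a, 0 < a -> ex_series (fun k => / mu a k).
Definition HM (mu : R -> nat -> R) := forall a b, 0 < a -> a <= b -> forall k, mu a k <= mu b k.
Definition H2 (mu : R -> nat -> R) := forall a, 0 < a -> exists b, 0 < b /\
     Rbar_lt 0 (LimInf_seq (fun k => mu b k / INR k * tail_sum (mu a) (2 * k)%nat)).
Definition HS (mu : R -> nat -> R) := forall a, 0 < a -> exists b A, 0 < b /\ 1 <= A /\
     forall j : nat, (mu a j) ^ 2 <= A * mu b (2 * j)%nat.

Lemma MG mu : HW mu -> HN mu -> HM mu -> H2 mu -> HS mu ->
  forall a0, 0 < a0 -> exists b C, 0 < b /\ 1 <= C /\ forall k, mu a0 (2*k)%nat <= C * mu b k.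
Proof.
  intros W E M H2m HSm a0 Ha0.
  destruct (HSm a0 Ha0) as [a1 [A1 [Ha1 [HA1 Hsq]]]].
  set (a := Rmax a0 a1).
  assert (Ha : 0 < a) by (unfold a; apply Rlt_le_trans with a0; [lra| apply Rmax_l]).
  assert (Ma0 : forall k, mu a0 k <= mu a k) by (intros; apply M; auto; apply Rmax_l).
  assert (Ma1 : forall k, mu a1 k <= mu a k) by (intros; apply M; auto; apply Rmax_r).
  destruct (H2m a Ha) as [b [Hb Hlim]].
  destruct (liminf_pos _ Hlim) as [eps [Heps [N HN]]].
  set (T := tail_sum (mu a0) 0).
  assert (HT : 0 <= T) by (apply tail_nonneg; auto).
  set (D := 2 * A1 * T).
  assert (HD : 0 <= D) by (unfold D; nra).
  set (N' := Nat.max N 1).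
  exists b, (Rmax 1 (Rmax ((2 + D)/eps) (mu a0 (2*N')%nat))).
  split; auto. split. apply Rmax_l.
  intros k.
  pose proof (ws_ge1 _ (W b Hb) k) as Hbk.
  pose proof (ws_ge1 _ (W a0 Ha0) (2*k)) as Hak.
  destruct (Compare_dec.le_lt_dec N' k) as [Hk|Hk].
  -
    assert (Hk1 : (1 <= k)%nat) by lia.
    specialize (HN k ltac:(lia)).
    assert (Ht1 := tail_split (mu a) (2*k) (2*k) (W a Ha) (E a Ha)).
    assert (Ht2 := SQ (mu a0) (mu a) A1 (W a0 Ha0) (W a Ha) (E a0 Ha0) (E a Ha) ltac:(lra)
                     ltac:(intros m; specialize (Hsq m); specialize (Ma1 (2*m)%nat); nra) (2*k)).
    replace (2 * (2 * k))%nat with (2*k + 2*k)%nat in Ht2 by lia.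
    assert (Ht3 : tail_sum (mu a0) (2*k) <= T) by (apply tail_mono; auto; lia).
    assert (Hmk : mu a0 (2*k)%nat <= mu a (2*k)%nat) by auto.
    set (P := mu a0 (2*k)%nat) in *. set (Q := mu b k) in *.
    set (t := tail_sum (mu a) (2*k)) in *.
    assert (HK : 1 <= INR k) by (apply (le_INR 1); lia).
    rewrite mult_INR in Ht1. simpl INR in Ht1.
    assert (Ht : t <= (2 * INR k + D) / P).
    { assert (2 * INR k / mu a (2*k)%nat <= 2 * INR k / P).
      { unfold Rdiv. apply Rmult_le_compat_l. lra. apply Rinv_le_contravar; lra. }
      assert (2 * A1 * tail_sum (mu a0) (2*k) / P <= D / P).
      { unfold Rdiv, D. apply Rmult_le_compat_r. left; apply Rinv_0_lt_compat; lra. nra. }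
      replace ((2 * INR k + D)/P) with (2 * INR k / P + D / P) by (field; lra). lra. }
    assert (HQ : eps * INR k * P < Q * (2 * INR k + D)).
    { assert (E1 : Q / INR k * t <= Q / INR k * ((2 * INR k + D) / P)).
      { apply Rmult_le_compat_l; auto. unfold Rdiv; apply Rmult_le_pos; [lra|left; apply Rinv_0_lt_compat; lra]. }
      assert (E2 : Q / INR k * ((2 * INR k + D) / P) = Q * (2 * INR k + D) / (INR k * P)) by (field; lra).
      rewrite E2 in E1.
      assert (E3 : eps < Q * (2 * INR k + D) / (INR k * P)) by lra.
      apply Rmult_lt_compat_r with (r := INR k * P) in E3; [|nra].
      replace (Q * (2 * INR k + D) / (INR k * P) * (INR k * P)) with (Q * (2 * INR k + D)) in E3 by (field; lra).
      lra. }
    assert (P <= (2 + D) / eps * Q).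
    { apply Rmult_le_reg_l with (eps * INR k). nra.
      replace (eps * INR k * ((2 + D) / eps * Q)) with (INR k * Q * (2 + D)) by (field; lra).
      assert (0 <= Q * D * (INR k - 1)) by (apply Rmult_le_pos; [apply Rmult_le_pos|]; lra). nra. }
    eapply Rle_trans. apply H. apply Rmult_le_compat_r. lra.
    eapply Rle_trans; [apply Rmax_l| apply Rmax_r].
  - assert (mu a0 (2*k)%nat <= mu a0 (2*N')%nat) by (apply ws_mono; auto; lia).
    assert (Hm : mu a0 (2*N')%nat <= Rmax 1 (Rmax ((2 + D)/eps) (mu a0 (2*N')%nat))).
    { eapply Rle_trans; [apply Rmax_r| apply Rmax_r]. }
    pose proof (ws_ge1 _ (W a0 Ha0) (2*N')).
    nra.
Qed.

Lemma half i : exists h, (i <= 2*h /\ 2*h <= i+1)%nat.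
Proof. induction i. exists 0%nat; lia. destruct IHi as [h Hh].
  destruct (Nat.eq_dec (2*h) (i+1)). exists h; lia. exists (S h); lia. Qed.

Lemma tau_pos rho i : weight_seq rho -> ex_series (fun n => / rho n) -> (1 <= i)%nat -> 0 < tau_w rho i.
Proof.
  intros W E Hi. unfold tau_w. pose proof (tail_nonneg rho i W E). pose proof (ws_ge1 rho W i).
  assert (1 <= INR i) by (apply (le_INR 1); lia).
  assert (0 < INR i / rho i) by (unfold Rdiv; apply Rmult_lt_0_compat; [lra|apply Rinv_0_lt_compat; lra]).
  lra.
Qed.

Lemma UP rho j : weight_seq rho -> ex_series (fun n => / rho n) -> (1 <= j)%nat ->
  sigma_w rho j <= tau_w rho 1 * rho j.
Proof.
  intros W E Hj. destruct j as [|j']. lia. set (j := S j').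
  change (sigma_w rho j) with (tau_w rho 1 * INR j / tau_w rho j).
  pose proof (tau_pos rho 1 W E (le_n 1)). pose proof (tau_pos rho j W E Hj).
  pose proof (tail_nonneg rho j W E). pose proof (ws_ge1 rho W j).
  unfold Rdiv. rewrite Rmult_assoc. apply Rmult_le_compat_l. lra.
  apply Rmult_le_reg_l with (tau_w rho j). lra.
  replace (tau_w rho j * (INR j * / tau_w rho j)) with (INR j) by (field; lra).
  unfold tau_w. replace ((INR j / rho j + tail_sum rho j) * rho j) with (INR j + tail_sum rho j * rho j) by (field; lra).
  nra.
Qed.

Lemma LOW mu : HW mu -> HN mu -> HM mu -> H2 mu -> HS mu ->
  forall g, 0 < g -> exists b c, 0 < b /\ 0 < c /\ c <= 1 /\
    forall i, (1 <= i)%nat -> c * mu g i <= sigma_w (mu b) i.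
Proof.
  intros W E M H2m HSm g Hg.
  destruct (MG mu W E M H2m HSm g Hg) as [d [C3 [Hd [HC3 Hmg]]]].
  destruct (HSm d Hd) as [b0 [A4 [Hb0 [HA4 Hsq]]]].
  set (b := Rmax b0 g).
  assert (Hb : 0 < b) by (unfold b; apply Rlt_le_trans with g; [lra| apply Rmax_r]).
  assert (Mb0 : forall k, mu b0 k <= mu b k) by (intros; apply M; auto; apply Rmax_l).
  assert (Mg : forall k, mu g k <= mu b k) by (intros; apply M; auto; apply Rmax_r).
  set (T := tail_sum (mu d) 0).
  assert (HT : 0 <= T) by (apply tail_nonneg; auto).
  set (D := 2 * A4 * T * C3).
  assert (HD : 0 <= D) by (unfold D; apply Rmult_le_pos; [|lra]; nra).
  set (t1 := tau_w (mu b) 1).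
  assert (Ht1 : 0 < t1) by (apply tau_pos; auto).
  exists b, (Rmin 1 (t1 / (2 + D))).
  assert (Hc : 0 < t1 / (2 + D)) by (unfold Rdiv; apply Rmult_lt_0_compat; [lra|apply Rinv_0_lt_compat; lra]).
  split; auto. split. apply Rmin_glb_lt; lra. split. apply Rmin_l.
  intros i Hi.
  destruct (half i) as [h [Hh1 Hh2]].
  assert (HI : 1 <= INR i) by (apply (le_INR 1); lia).
  pose proof (ws_ge1 _ (W g Hg) i) as Hgi.
  pose proof (ws_ge1 _ (W d Hd) h) as Hdh.
  assert (Hs1 := tail_split (mu b) i (2*h - i) (W b Hb) (E b Hb)).
  replace (i + (2*h - i))%nat with (2*h)%nat in Hs1 by lia.
  assert (Hn : INR (2*h - i) <= 1) by (apply (le_INR _ 1); lia).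
  assert (Hs2 := SQ (mu d) (mu b) A4 (W d Hd) (W b Hb) (E d Hd) (E b Hb) ltac:(lra)
                     ltac:(intros m; specialize (Hsq m); specialize (Mb0 (2*m)%nat); nra) h).
  assert (Hs3 : tail_sum (mu d) h <= T) by (apply tail_mono; auto; lia).
  assert (Hgm : mu g i <= C3 * mu d h).
  { eapply Rle_trans. apply (ws_mono _ (W g Hg) i (2*h) Hh1). apply Hmg. }
  pose proof (Mg i) as Hgb.
  set (x := mu g i) in *. set (y := mu b i) in *. set (z := mu d h) in *.
  assert (Htau : tau_w (mu b) i <= (2 + D) * INR i / x).
  { unfold tau_w. fold y.
    assert (INR (2*h-i) / y <= 1 / x).
    { unfold Rdiv. apply Rmult_le_compat; try lra. apply pos_INR. left; apply Rinv_0_lt_compat; lra.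
      apply Rinv_le_contravar; lra. }
    assert (2 * A4 * tail_sum (mu d) h / z <= D / x).
    { apply Rmult_le_reg_l with (z * x). nra.
      replace (z * x * (2 * A4 * tail_sum (mu d) h / z)) with (x * (2 * A4 * tail_sum (mu d) h)) by (field; lra).
      replace (z * x * (D / x)) with (z * D) by (field; lra).
      unfold D. 
      assert (2 * A4 * tail_sum (mu d) h <= 2 * A4 * T) by nra.
      assert (0 <= 2 * A4 * tail_sum (mu d) h) by (pose proof (tail_nonneg (mu d) h (W d Hd) (E d Hd)); nra).
      nra. }
    assert (INR i / y <= INR i / x).
    { unfold Rdiv. apply Rmult_le_compat_l. lra. apply Rinv_le_contravar; lra. }
    replace ((2 + D) * INR i / x) with (2 * INR i / x + D * INR i / x) by (field; lra).
    assert (1 / x <= INR i / x) by (unfold Rdiv; apply Rmult_le_compat_r; [left; apply Rinv_0_lt_compat|]; lra).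
    assert (D / x <= D * INR i / x).
    { unfold Rdiv. rewrite Rmult_assoc, (Rmult_comm (INR i)), <- Rmult_assoc.
      assert (0 <= D * / x) by (apply Rmult_le_pos; [lra|left; apply Rinv_0_lt_compat; lra]). nra. }
    replace (2 * INR i / x) with (INR i / x + INR i / x) by (field; lra).
    lra. }
  destruct i as [|i']. lia.
  change (sigma_w (mu b) (S i')) with (t1 * INR (S i') / tau_w (mu b) (S i')).
  pose proof (tau_pos (mu b) (S i') (W b Hb) (E b Hb) Hi) as Htp.
  eapply Rle_trans with (t1 / (2 + D) * x).
  { apply Rmult_le_compat_r. lra. apply Rmin_r. }
  apply Rmult_le_reg_l with (tau_w (mu b) (S i') * (2 + D)). nra.
  replace (tau_w (mu b) (S i') * (2 + D) * (t1 * INR (S i') / tau_w (mu b) (S i'))) with ((2+D) * (t1 * INR (S i'))) by (field; lra).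
  replace (tau_w (mu b) (S i') * (2 + D) * (t1 / (2 + D) * x)) with (t1 * (tau_w (mu b) (S i') * x)) by (field; lra).
  assert (tau_w (mu b) (S i') * x <= (2 + D) * INR (S i')).
  { apply Rmult_le_reg_r with (/ x). apply Rinv_0_lt_compat; lra.
    replace (tau_w (mu b) (S i') * x * / x) with (tau_w (mu b) (S i')) by (field; lra). exact Htau. }
  assert (0 < / x) by (apply Rinv_0_lt_compat; lra).
  nra.
Qed.

Lemma Mseq_ge1 rho : weight_seq rho -> forall j, 1 <= Mseq rho j.
Proof. intros W j. induction j; simpl. pose proof (ws_ge1 rho W 0); lra.
  pose proof (ws_ge1 rho W (S j)). nra. Qed.

Lemma Mseq_low rho h : weight_seq rho -> forall j, (rho h)^(j+1-h) <= Mseq rho j.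
Proof.
  intros W j. pose proof (ws_ge1 rho W h) as Hh. induction j.
  - simpl. destruct h. simpl. lra. replace (1 - S h)%nat with 0%nat by lia. simpl. destruct W; lra.
  - simpl Mseq. pose proof (ws_ge1 rho W (S j)). pose proof (Mseq_ge1 rho W j).
    destruct (Compare_dec.le_lt_dec h (S j)).
    + replace (S j + 1 - h)%nat with (S (j + 1 - h)) by lia. change (rho h ^ S (j + 1 - h)) with (rho h * rho h ^ (j + 1 - h)).
      pose proof (ws_mono rho W h (S j) l).
      assert (0 <= rho h ^ (j+1-h)) by (apply pow_le; lra).
      rewrite Rmult_comm. apply Rmult_le_compat; lra.
    + replace (S j + 1 - h)%nat with 0%nat by lia. simpl. nra.
Qed.

Lemma Sseq_low rho nu c : weight_seq rho -> 0 <= c ->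
  (forall i, (1 <= i)%nat -> c * rho i <= sigma_w nu i) ->
  forall j, c^j * Mseq rho j <= Sseq nu j.
Proof.
  intros W Hc H j. induction j.
  - simpl. destruct W as [H0 _]. rewrite H0. lra.
  - simpl Sseq. simpl Mseq. simpl pow.
    pose proof (Mseq_ge1 rho W j). pose proof (ws_ge1 rho W (S j)).
    assert (0 <= c ^ j) by (apply pow_le; lra).
    replace (c * c ^ j * (Mseq rho j * rho (S j))) with ((c^j * Mseq rho j) * (c * rho (S j))) by ring.
    apply Rmult_le_compat; try nra. apply H. lia.
Qed.

Lemma sq_le a b : 0 <= a -> 0 <= b -> a^2 <= b^2 -> a <= b.
Proof. intros. destruct (Rle_dec a b); auto. nra. Qed.

Theorem lemma4p7 (mu : R -> nat -> R) :
  weight_matrix mu ->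
  nonquasianalytic_matrix mu ->
  (forall a b, 0 < a -> a <= b -> forall k, mu a k <= mu b k) ->
  (forall a, 0 < a -> exists b, 0 < b /\
     Rbar_lt 0 (LimInf_seq (fun k => mu b k / INR k * tail_sum (mu a) (2 * k)%nat))) ->
  (forall a, 0 < a -> exists b A, 0 < b /\ 1 <= A /\
     forall j : nat, (mu a j) ^ 2 <= A * mu b (2 * j)%nat) ->
  (forall a, 0 < a -> exists b, 0 < b /\
     Rbar_lt 0 (LimInf_seq (fun k => mu b k / INR k * tail_sum (mu a) k)))
  /\
  (forall a, 0 < a -> exists b A, 0 < b /\ 1 <= A /\
     forall j : nat, (1 <= j)%nat ->
       sigma_w (mu a) j <= A * Rpower (Sseq (mu b) j) (/ INR j)).
Proof.
  intros [W _] E M H2m HSm.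
  change (HW mu) in W. change (HN mu) in E. change (HM mu) in M.
  change (H2 mu) in H2m. change (HS mu) in HSm.
  split.
  - intros a Ha. destruct (H2m a Ha) as [b [Hb Hl]]. exists b. split; auto.
    eapply Rbar_lt_le_trans. apply Hl. apply LimInf_le. exists 1%nat. intros n Hn.
    apply Rmult_le_compat_l.
    + pose proof (ws_ge1 _ (W b Hb) n). assert (1 <= INR n) by (apply (le_INR 1); lia).
      unfold Rdiv. apply Rmult_le_pos. lra. left; apply Rinv_0_lt_compat; lra.
    + apply tail_mono; auto. lia.
  - intros a Ha.
    destruct (HSm a Ha) as [d1 [A1 [Hd1 [HA1 Hsq]]]].
    destruct (MG mu W E M H2m HSm d1 Hd1) as [e1 [C1 [He1 [HC1 Hm1]]]].
    destruct (MG mu W E M H2m HSm e1 He1) as [g [C2 [Hg [HC2 Hmg2]]]].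
    destruct (LOW mu W E M H2m HSm g Hg) as [b [c [Hb [Hc [Hc1 Hlow]]]]].
    set (t1 := tau_w (mu a) 1).
    assert (Ht1 : 0 < t1) by (apply tau_pos; auto).
    set (K := A1 * C1 * C2).
    assert (HK : 1 <= K) by (unfold K; assert (1 <= A1 * C1) by nra; nra).
    set (A0 := t1 * K / c).
    assert (HA0 : 0 < A0) by (unfold A0, Rdiv; apply Rmult_lt_0_compat; [nra|apply Rinv_0_lt_compat; lra]).
    exists b, (Rmax 1 A0). split; auto. split. apply Rmax_l.
    intros j Hj.
    destruct (half j) as [h [Hh1 Hh2]].
    pose proof (ws_ge1 _ (W g Hg) h) as HX.
    pose proof (ws_ge1 _ (W a Ha) j) as Hm.
    pose proof (Hm1 j). pose proof (ws_mono _ (W e1 He1) j (2*h) Hh1). pose proof (Hmg2 h).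
    pose proof (ws_ge1 _ (W e1 He1) j).
    set (X := mu g h) in *.
    set (m := mu a j) in *.
    assert (Hm2 : m^2 <= K * X).
    { eapply Rle_trans. apply Hsq. unfold K.
      assert (mu e1 j <= C2 * X) by lra.
      assert (mu d1 (2*j)%nat <= C1 * (C2 * X)) by nra.
      nra. }
    set (Sj := Sseq (mu b) j).
    assert (HS1 : c^j * X^(j+1-h) <= Sj).
    { eapply Rle_trans; [|apply (Sseq_low (mu g) (mu b) c (W g Hg) ltac:(lra) Hlow j)].
      apply Rmult_le_compat_l. apply pow_le; lra. apply Mseq_low. auto. }
    assert (HXj : X^j <= (X^(j+1-h))^2).
    { rewrite <- pow_mult. apply Rle_pow. auto. lia. }
    set (sg := sigma_w (mu a) j).
    assert (Hsg : 0 < sg).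
    { unfold sg. destruct j as [|j']. lia. change (sigma_w (mu a) (S j')) with (tau_w (mu a) 1 * INR (S j') / tau_w (mu a) (S j')).
      pose proof (tau_pos (mu a) (S j') (W a Ha) (E a Ha) Hj).
      pose proof (tau_pos (mu a) 1 (W a Ha) (E a Ha) (le_n 1)).
      assert (0 < INR (S j')) by (apply lt_0_INR; lia).
      unfold Rdiv. apply Rmult_lt_0_compat. nra. apply Rinv_0_lt_compat; lra. }
    assert (Hup : sg <= t1 * m) by (apply UP; auto).
    set (y := sg / A0).
    assert (Hy : 0 < y) by (unfold y, Rdiv; apply Rmult_lt_0_compat; [lra|apply Rinv_0_lt_compat; lra]).
    assert (Hy1 : y <= m * c / K).
    { unfold y, A0. apply Rmult_le_reg_l with (t1 * K / c).
      unfold Rdiv; apply Rmult_lt_0_compat; [nra|apply Rinv_0_lt_compat; lra].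
      replace (t1 * K / c * (sg / (t1 * K / c))) with sg by (field; repeat split; lra).
      replace (t1 * K / c * (m * c / K)) with (t1 * m) by (field; lra). lra. }
    assert (Hy2 : y^2 <= c^2 * X).
    { assert (Q1 : y^2 <= (m * c / K)^2) by (apply pow_incr; lra).
      replace ((m * c / K)^2) with (m^2 * c^2 / (K * K)) in Q1 by (field; lra).
      assert (Q2 : m^2 * c^2 / (K*K) <= K * X * c^2 / (K * K)).
      { unfold Rdiv. apply Rmult_le_compat_r. left; apply Rinv_0_lt_compat; nra.
        apply Rmult_le_compat_r. nra. lra. }
      replace (K * X * c^2 / (K*K)) with (c^2 * X / K) in Q2 by (field; lra).
      assert (Q3 : c^2 * X / K <= c^2 * X).
      { apply Rmult_le_reg_l with K. lra.
        replace (K * (c^2 * X / K)) with (c^2 * X) by (field; lra).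
        assert (0 <= c^2 * X) by nra.
        assert (0 <= c^2 * X * (K - 1)) by (apply Rmult_le_pos; nra). nra. }
      lra. }
    assert (Hyj : y^j <= Sj).
    { apply sq_le. apply pow_le; lra. eapply Rle_trans; [|apply HS1].
      apply Rmult_le_pos. apply pow_le; lra. apply pow_le; lra.
      eapply Rle_trans with ((c^j * X^(j+1-h))^2).
      - rewrite <- pow_mult, Nat.mul_comm, pow_mult.
        eapply Rle_trans. apply pow_incr. split. apply pow2_ge_0. apply Hy2.
        rewrite Rpow_mult_distr. rewrite (Rpow_mult_distr (c^j)).
        rewrite <- !pow_mult, Nat.mul_comm.
        apply Rmult_le_compat_l. apply pow_le; nra. rewrite pow_mult. exact HXj.
      - apply pow_incr. split. apply Rmult_le_pos; apply pow_le; lra. exact HS1. }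
    assert (HR : y <= Rpower Sj (/ INR j)).
    { assert (HINR : 0 < INR j) by (apply lt_0_INR; lia).
      replace y with (Rpower (y^j) (/ INR j)).
      apply Rle_Rpower_l. left; apply Rinv_0_lt_compat; lra. split. apply pow_lt; lra. exact Hyj.
      rewrite <- Rpower_pow by lra. rewrite Rpower_mult. rewrite Rinv_r by lra. apply Rpower_1. lra. }
    assert (HRp : 0 < Rpower Sj (/ INR j)) by (unfold Rpower; apply exp_pos).
    fold sg. apply Rle_trans with (A0 * Rpower Sj (/ INR j)).
    { replace sg with (A0 * y) by (unfold y; field; lra). apply Rmult_le_compat_l; lra. }
    apply Rmult_le_compat_r. lra. apply Rmax_r.
Qed.
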